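(* Let $X$ be a real Banach space with dual $X^*$, and let $f:X\to\mathbb{R}\cup\{+\infty\}$ be a proper, convex and lower semicontinuous function. Suppose that \[ p(x)\ge 0\quad\text{for every } x\in\operatorname{dom}\partial f \text{ and every } p\in\partial f(x). \] Then $0\in\partial f(0)$.
   Context: For $x_0\in\operatorname{dom} f:=\{x\in X: f(x)\neq+\infty\}$, the (convex-analysis) subdifferential is $\partial f(x_0):=\{p\in X^*: f(x)\ge f(x_0)+p(x-x_0)\ \forall x\in X\}$; if $x_0\notin\operatorname{dom} f$ then $\partial f(x_0)=\emptyset$. The set $\operatorname{dom}\partial f:=\{x\in X:\partial f(x)\neq\emptyset\}$. The hypothesis is written in the paper as $\langle \partial f(x),x\rangle\ge 0$ for all $x\in\operatorname{dom}\partial f$. *)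

(* Defs.v *)
From HB Require Import structures.
From mathcomp Require Import all_boot all_order all_algebra.
From mathcomp Require Import all_classical all_reals all_analysis.
Set Implicit Arguments. Unset Strict Implicit. Unset Printing Implicit Defensive.
Import Order.TTheory GRing.Theory Num.Theory.
Import numFieldNormedType.Exports.
Local Open Scope ring_scope.

Section ConvexAnalysis.
Context {R : realType} {X : normedModType R}.

Definition is_dual (p : X -> R) : Prop :=
  (forall (a : R) (x y : X), p (a *: x + y) = a * p x + p y) /\ continuous p.

Definition edom (f : X -> \bar R) : set X := [set x | f x != +oo%E].

(* f : X -> R U {+oo} proper *)
Definition proper_fun (f : X -> \bar R) : Prop :=
  (forall x, f x != -oo%E) /\ (exists x, f x != +oo%E).

Definition convex_fun (f : X -> \bar R) : Prop :=
  forall (x y : X) (t : R), 0 < t < 1 ->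
    (f (t *: x + (1 - t) *: y)%R <= t%:E * f x + (1 - t)%:E * f y)%E.

Definition subdiff (f : X -> \bar R) (x0 : X) (p : X -> R) : Prop :=
  is_dual p /\ x0 \in edom f /\
  forall x : X, (f x >= f x0 + (p (x - x0)%R)%:E)%E.

Definition dom_subdiff (f : X -> \bar R) : set X :=
  [set x | exists p, subdiff f x p].

End ConvexAnalysis.

(* Main.v *)
Require Import Defs.
From HB Require Import structures.
From mathcomp Require Import all_boot all_order all_algebra.
From mathcomp Require Import all_classical all_reals all_analysis.
From mathcomp Require Import ring lra.
Import Order.TTheory GRing.Theory Num.Theory.
Import numFieldNormedType.Exports.
Local Open Scope ring_scope.
Local Open Scope classical_set_scope.

Lemma subKr_ (V : zmodType) (x y : V) : x - (x - y) = y.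
Proof. by rewrite opprB addrC subrK. Qed.

Section InfLemmas.
Variable R : realType.
Implicit Types E : set R.

Lemma inf_le_of E b e : (forall y, E y -> b <= y) -> E e -> inf E <= e.
Proof. by move=> hb Ee; apply: ge_inf => //; exists b. Qed.

Lemma le_inf_of E c : (exists e, E e) -> (forall y, E y -> c <= y) -> c <= inf E.
Proof. by move=> [e Ee] hc; apply: lb_le_inf => //; exists e. Qed.

Lemma inf_add_le E1 E2 c : (exists e, E1 e) -> (exists e, E2 e) ->
  (forall e1 e2, E1 e1 -> E2 e2 -> c <= e1 + e2) -> c <= inf E1 + inf E2.
Proof.
move=> n1 n2 h.
have : c - inf E2 <= inf E1.
  apply: le_inf_of => // e1 E1e1.
  have : c - e1 <= inf E2 by apply: le_inf_of => // e2 E2e2; have := h _ _ E1e1 E2e2; lra.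
  lra.
lra.
Qed.

Lemma inf_hom E1 E2 a b1 b2 : 0 < a -> (exists e, E2 e) ->
  (forall y, E1 y -> b1 <= y) -> (forall y, E2 y -> b2 <= y) ->
  (forall e, E2 e -> E1 (a * e)) -> (forall e, E1 e -> E2 (e / a)) ->
  inf E1 = a * inf E2.
Proof.
move=> a0 [e0 E2e0] lb1 lb2 h21 h12.
have n1 : exists e, E1 e by exists (a * e0); exact: h21.
apply/eqP; rewrite eq_le; apply/andP; split.
- have : inf E1 / a <= inf E2.
    apply: le_inf_of; first by exists e0.
    move=> y E2y; rewrite ler_pdivrMr // mulrC; exact: inf_le_of lb1 (h21 _ E2y).
  by rewrite ler_pdivrMr // mulrC.
- apply: le_inf_of => // y E1y.
  have : inf E2 <= y / a by exact: inf_le_of lb2 (h12 _ E1y).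
  by rewrite ler_pdivlMr // mulrC.
Qed.

End InfLemmas.
Arguments inf_le_of {R E b e}.
Arguments le_inf_of {R E c}.
Arguments inf_add_le {R E1 E2 c}.
Arguments inf_hom {R E1 E2 a b1 b2}.


Section HahnBanach.
Variables (R : realType) (V : lmodType R).

Definition sublin (p : V -> R) :=
  (forall x y, p (x + y) <= p x + p y) /\
  (forall (a : R) x, 0 < a -> p (a *: x) = a * p x).

Lemma sublin0 p : sublin p -> p 0 = 0.
Proof.
move=> [_ hom]; have := hom 2 0 (ltr0Sn _ 1); rewrite scaler0 => h.
have : p 0 = 2 * p 0 by [].
lra.
Qed.

Lemma sublinN p x : sublin p -> - p (- x) <= p x.
Proof.
move=> hp; have := hp.1 x (- x); rewrite addrN (sublin0 _ hp); lra.
Qed.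

Lemma sublin_hom0 p (a : R) x : sublin p -> 0 <= a -> p (a *: x) = a * p x.
Proof.
move=> hp; rewrite le_eqVlt => /orP[/eqP <-|a0]; last exact: hp.2.
by rewrite scale0r mul0r (sublin0 _ hp).
Qed.

Lemma minimal_oddN p : sublin p ->
  (forall p', sublin p' -> (forall x, p' x <= p x) -> forall x, p x <= p' x) ->
  forall x0, p (- x0) = - p x0.
Proof.
move=> hp hmin x0.
pose E x := [set p (x + t *: x0) - t * p x0 | t in [set t : R | 0 <= t]].
pose p' x := inf (E x).
have lbE x y : E x y -> - p (- x) <= y.
  move=> [t t0 <-].
  have h1 := hp.1 (x + t *: x0) (- x).
  rewrite addrAC addrN add0r (sublin_hom0 _ _ _ hp t0) in h1.
  lra.
have nE x : exists e, E x e.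
  by exists (p (x + 0 *: x0) - 0 * p x0); exists 0 => //=.
have p'le x : p' x <= p x.
  rewrite /p'; apply: (@inf_le_of R (E x) (- p (- x)) (p x) (lbE x)).
  exists 0 => //=.
  by rewrite scale0r addr0 mul0r subr0.
have hp' : sublin p'.
  split.
  - move=> x y; apply: inf_add_le => //.
    move=> _ _ [t1 t10 <-] [t2 t20 <-].
    apply: le_trans; first by apply: (inf_le_of (lbE (x + y))); exists (t1 + t2) => //=; rewrite addr_ge0.
    have := hp.1 (x + t1 *: x0) (y + t2 *: x0).
    rewrite scalerDl; rewrite (_ : x + y + _ = x + t1 *: x0 + (y + t2 *: x0)); last first.
      by rewrite addrACA.
    rewrite mulrDl; lra.
  - move=> a x a0; apply: (inf_hom (b1 := - p (- (a *: x))) (b2 := - p (- x))) => //.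
    + exact: lbE.
    + exact: lbE.
    + move=> _ [t t0 <-]; exists (a * t); first by rewrite /= mulr_ge0 // ltW.
      by rewrite -scalerA -scalerDr hp.2 // mulrBr mulrA.
    + move=> _ [t t0 <-]; exists (t / a); first by rewrite /= divr_ge0 // ltW.
      rewrite (_ : a *: x + t *: x0 = a *: (x + (t / a) *: x0)); last first.
        by rewrite scalerDr scalerA mulrCA divff ?gt_eqF // mulr1.
      rewrite hp.2 //; field; by rewrite gt_eqF.
have := hmin p' hp' p'le (- x0).
have : p' (- x0) <= p (- x0 + 1 *: x0) - 1 * p x0.
  by apply: (inf_le_of (lbE (- x0))); exists 1 => //=; exact: ler01.
rewrite scale1r addNr (sublin0 _ hp) mul1r.
have := sublinN p x0 hp.
lra.
Qed.

Lemma minimal_linear p : sublin p -> (forall x0, p (- x0) = - p x0) ->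
  forall (a : R) x y, p (a *: x + y) = a * p x + p y.
Proof.
move=> hp hN.
have add x y : p (x + y) = p x + p y.
  apply/eqP; rewrite eq_le hp.1 /=.
  have := hp.1 (x + y) (- y); rewrite addrK hN; lra.
move=> a x y; rewrite add; congr (_ + _).
have [a0|a0] := leP 0 a; first exact: sublin_hom0.
have -> : a *: x = - ((- a) *: x) by rewrite scaleNr opprK.
rewrite hN sublin_hom0 //; [lra | lra].
Qed.

Variable q : V -> R.
Hypothesis hq : sublin q.

Let T := {p : V -> R | sublin p /\ forall x, p x <= q x}.
Let Rle (a b : T) : bool := `[< forall x, sval b x <= sval a x >].

Lemma hahn_banach : exists L : V -> R,
  (forall (a : R) x y, L (a *: x + y) = a * L x + L y) /\ (forall x, L x <= q x).
Proof.
pose t0 : T := exist _ q (conj hq (fun x => lexx _)).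
have [t tmax] : exists t, premaximal Rle t.
  apply: (@ZL_preorder _ t0).
  - by move=> t; apply/asboolP => x.
  - move=> r s t /asboolP hrs /asboolP hst; apply/asboolP => x.
    exact: le_trans (hst x) (hrs x).
  - move=> A Atot.
    have [[p0 Ap0]|nA] := pselect (exists p, A p); last first.
      by exists t0 => s As; exfalso; apply: nA; exists s.
    pose E x := [set sval p x | p in A].
    pose m x := inf (E x).
    have lbE x y : E x y -> - q (- x) <= y.
      move=> [p Ap <-]; have := sublinN (sval p) x (proj1 (svalP p)).
      have := (proj2 (svalP p)) (- x); lra.
    have nE x : exists e, E x e by exists (sval p0 x); exists p0.
    have mle p x : A p -> m x <= sval p x.
      by move=> Ap; apply: (inf_le_of (lbE x)); exists p.
    have hm : sublin m.
      split.
      + move=> x y; apply: inf_add_le => //.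
        move=> _ _ [p1 Ap1 <-] [p2 Ap2 <-].
        have [/asboolP h12|/asboolP h21] := Atot _ _ Ap1 Ap2.
        * apply: le_trans (mle _ _ Ap2) _.
          have := (proj1 (svalP p2)).1 x y; have := h12 x; lra.
        * apply: le_trans (mle _ _ Ap1) _.
          have := (proj1 (svalP p1)).1 x y; have := h21 y; lra.
      + move=> a x a0; apply: (inf_hom (b1 := - q (- (a *: x))) (b2 := - q (- x))) => //.
        * exact: lbE.
        * exact: lbE.
        * by move=> _ [p Ap <-]; exists p => //; rewrite (proj1 (svalP p)).2.
        * move=> _ [p Ap <-]; exists p => //.
          rewrite (proj1 (svalP p)).2 //; field; by rewrite gt_eqF.
    have mq x : m x <= q x.
      by apply: le_trans (mle _ _ Ap0) _; exact: (proj2 (svalP p0)).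
    exists (exist _ m (conj hm mq)) => s As; apply/asboolP => x /=.
    exact: mle.
have hmin : forall p', sublin p' -> (forall x, p' x <= sval t x) ->
    forall x, sval t x <= p' x.
  move=> p' hp' hle.
  have hq' : forall x, p' x <= q x.
    by move=> x; apply: le_trans (hle x) _; exact: (proj2 (svalP t)).
  have := tmax (exist _ p' (conj hp' hq')).
  rewrite /Rle /=.
  by move=> /(_ (asboolT hle)) /asboolP.
exists (sval t); split; last exact: (proj2 (svalP t)).
apply: minimal_linear; first exact: (proj1 (svalP t)).
apply: minimal_oddN => //; exact: (proj1 (svalP t)).
Qed.

End HahnBanach.
Arguments sublin {R V}.
Arguments hahn_banach {R V q}.
Section Sandwich.
Variables (R : realType) (V : normedModType R).
Variables (D : set V) (phi rho : V -> R) (C : R).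
Hypothesis D0 : D 0.
Hypothesis Dconv : forall (s : R) u v, 0 < s < 1 -> D u -> D v -> D (s *: u + (1 - s) *: v).
Hypothesis phi0 : phi 0 = 0.
Hypothesis phiconv : forall (s : R) u v, 0 < s < 1 -> D u -> D v ->
  phi (s *: u + (1 - s) *: v) <= s * phi u + (1 - s) * phi v.
Hypothesis rho0 : rho 0 = 0.
Hypothesis rhoconv : forall (s : R) u v, 0 < s < 1 ->
  rho (s *: u + (1 - s) *: v) <= s * rho u + (1 - s) * rho v.
Hypothesis rhoLip : forall a b, rho a - rho b <= C * `|a - b|.
Hypothesis phirho : forall u, D u -> - rho u <= phi u.

Let E (h : V) : set R := [set e | exists t u, 0 < t /\ D u /\
  e = t * (phi u + rho (u - t^-1 *: h))].
Let Q h := inf (E h).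

Let lbE h e : E h e -> - (C * `|h|) <= e.
Proof.
move=> [t [u [t0 [Du ->]]]].
have h1 := phirho _ Du.
have h2 := rhoLip u (u - t^-1 *: h).
have nt : `|t^-1| = t^-1 by rewrite ger0_norm // invr_ge0 ltW.
rewrite subKr_ normrZ nt in h2.
have : - (C * `|h|) = t * (- (C * (t^-1 * `|h|))).
  by field; rewrite gt_eqF.
move=> ->; rewrite ler_pM2l //; lra.
Qed.

Let nE h : exists e, E h e.
Proof. by exists (1 * (phi 0 + rho (0 - 1^-1 *: h))); exists 1, 0; split => //; exact: ltr01. Qed.

Let Qsub : sublin Q.
Proof.
split.
- move=> h1 h2; apply: inf_add_le => // _ _ [t1 [u1 [t10 [Du1 ->]]]] [t2 [u2 [t20 [Du2 ->]]]].
  apply: le_trans; first apply: (inf_le_of (lbE (h1 + h2))).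
  + pose t := t1 + t2.
    have t0 : 0 < t by rewrite addr_gt0.
    pose s := t1 / t.
    have s01 : 0 < s < 1.
      rewrite divr_gt0 //= ltr_pdivrMr // mul1r /t; lra.
    have hs : 1 - s = t2 / t by rewrite /s /t; field; rewrite gt_eqF.
    exists t, (s *: u1 + (1 - s) *: u2); split => //; split; first exact: Dconv.
    reflexivity.
  + pose t := t1 + t2.
    have t0 : 0 < t by rewrite addr_gt0.
    pose s := t1 / t.
    have s01 : 0 < s < 1.
      rewrite divr_gt0 //= ltr_pdivrMr // mul1r /t; lra.
    have hs : 1 - s = t2 / t by rewrite /s /t; field; rewrite gt_eqF.
    have hv : s *: u1 + (1 - s) *: u2 - t^-1 *: (h1 + h2) =
        s *: (u1 - t1^-1 *: h1) + (1 - s) *: (u2 - t2^-1 *: h2).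
      rewrite !scalerBr !scalerA hs /s.
      have -> : t1 / t * t1^-1 = t^-1 by field; rewrite !gt_eqF.
      have -> : t2 / t * t2^-1 = t^-1 by field; rewrite !gt_eqF.
      rewrite scalerDr; rewrite -!addrA; congr (_ + _).
      by rewrite opprD addrCA.
    rewrite -/t hv.
    have hp := phiconv _ _ _ s01 Du1 Du2.
    have hr := rhoconv s (u1 - t1^-1 *: h1) (u2 - t2^-1 *: h2) s01.
    have e1 : t * s = t1 by rewrite /s; field; rewrite gt_eqF.
    have e2 : t * (1 - s) = t2 by rewrite hs; field; rewrite gt_eqF.
    set a := phi (s *: u1 + (1 - s) *: u2) in hp *.
    set b := rho (s *: _ + _) in hr *.
    set p1 := phi u1 in hp *; set p2 := phi u2 in hp *.
    set r1 := rho (u1 - _) in hr *; set r2 := rho (u2 - _) in hr *.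
    rewrite -e1 -e2.
    have : t * (a + b) <= t * (s * p1 + (1 - s) * p2 + (s * r1 + (1 - s) * r2)).
      by rewrite ler_pM2l //; lra.
    move=> H; apply: le_trans H _; rewrite le_eqVlt; apply/orP; left; apply/eqP; ring.
- move=> a h a0; apply: (inf_hom (b1 := - (C * `|a *: h|)) (b2 := - (C * `|h|))) => //.
  + exact: lbE.
  + exact: lbE.
  + move=> _ [t [u [t0 [Du ->]]]]; exists (a * t), u; split; first exact: mulr_gt0.
    split => //.
    rewrite scalerA (_ : (a * t)^-1 * a = t^-1); last by field; rewrite !gt_eqF.
    by rewrite mulrA.
  + move=> _ [t [u [t0 [Du ->]]]]; exists (t / a), u; split; first exact: divr_gt0.
    split => //.
    rewrite (_ : (t / a)^-1 = t^-1 * a); last by field; rewrite !gt_eqF.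
    by rewrite -scalerA; field; rewrite gt_eqF.
Qed.

Lemma sandwich : exists L : V -> R,
  (forall (a : R) x y, L (a *: x + y) = a * L x + L y) /\
  (forall h, D h -> L h <= phi h) /\ (forall h, L h <= rho (- h)).
Proof.
have [L [Llin LQ]] := hahn_banach Qsub.
exists L; split => //; split.
- move=> h Dh; apply: le_trans (LQ h) _; apply: (inf_le_of (lbE h)).
  exists 1, h; split; first exact: ltr01.
  by split => //; rewrite invr1 scale1r subrr rho0 addr0 mul1r.
- move=> h; apply: le_trans (LQ h) _; apply: (inf_le_of (lbE h)).
  exists 1, 0; split; first exact: ltr01.
  by split => //; rewrite invr1 scale1r sub0r phi0 add0r mul1r.
Qed.

End Sandwich.
Lemma ereal_fin_between (R : realType) (y : \bar R) (a b : R) :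
  (a%:E <= y)%E -> (y <= b%:E)%E -> y = (fine y)%:E.
Proof. by case: y. Qed.

Section Ekeland.
Variables (R : realType) (X : completeNormedModType R).
Variables (G : X -> \bar R) (lam B : R) (x0 : X).
Hypotheses (lam0 : 0 < lam) (Glsc : lower_semicontinuous G)
  (GB : forall x, (B%:E <= G x)%E) (Gx0 : G x0 \is a fin_num).

Let inT x := (G x + (lam * `|x - x0|)%:E <= G x0)%E.
Let T := {x : X | inT x}.
Let g (t : T) : R := fine (G (sval t)).
Let g0 := fine (G x0).

Let inT_fin x : inT x -> G x = (fine (G x))%:E.
Proof.
rewrite /inT -(fineK Gx0); move: (GB x); case: (G x) => //.
Qed.

Let gE (t : T) : G (sval t) = (g t)%:E.
Proof. exact: inT_fin _ (svalP t). Qed.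

Let inTE x : inT x -> fine (G x) + lam * `|x - x0| <= g0.
Proof.
move=> h; have := h; rewrite /inT (inT_fin _ h) -(fineK Gx0) -EFinD lee_fin //.
Qed.

Let inTI x (r : R) : G x = r%:E -> r + lam * `|x - x0| <= g0 -> inT x.
Proof. by move=> e h; rewrite /inT e -(fineK Gx0) -EFinD lee_fin. Qed.

Let Bg (t : T) : B <= g t.
Proof. by have := GB (sval t); rewrite gE lee_fin. Qed.

Let Rle (a b : T) : bool := g b + lam * `|sval b - sval a| <= g a.

Let nn (x y : X) : 0 <= lam * `|x - y|.
Proof. by rewrite mulr_ge0 // ltW. Qed.

Let tri (x y z : X) : lam * `|x - z| <= lam * `|x - y| + lam * `|y - z|.
Proof. by rewrite -mulrDr ler_pM2l // ler_distD. Qed.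

Lemma ekeland : exists z, (G z <= G x0)%E /\
  forall x, (G z <= G x + (lam * `|x - z|)%:E)%E.
Proof.
have inT0 : inT x0 by rewrite /inT subrr normr0 mulr0 adde0.
pose t0 : T := exist _ x0 inT0.
have [z zmax] : exists z, premaximal Rle z.
  apply: (@ZL_preorder _ t0).
  - by move=> t; rewrite /Rle subrr normr0 mulr0 addr0.
  - move=> r s t; rewrite /Rle => hrs hst.
    have := tri (sval t) (sval s) (sval r); lra.
  - move=> A Atot.
    have [[p0 Ap0]|nA] := pselect (exists p, A p); last first.
      by exists t0 => s As; exfalso; apply: nA; exists s.
    pose m := inf [set g s | s in A].
    have lbm y : [set g s | s in A] y -> B <= y by move=> [s _ <-].
    have gm s : A s -> m <= g s by move=> As; apply: (inf_le_of lbm); exists s.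
    have [[s [As gs]]|natt] := pselect (exists s, A s /\ g s = m).
      exists s => s' As'; rewrite /Rle.
      have [h|h] := Atot _ _ As' As; first by [].
      move: h; rewrite /Rle => h.
      have gs' := gm _ As'.
      have : lam * `|sval s' - sval s| <= 0 by lra.
      rewrite pmulr_rle0 // normr_le0 subr_eq0 => /eqP e.
      by rewrite /g e subrr normr0 mulr0 addr0.
    have mlt s : A s -> m < g s.
      move=> As; rewrite lt_neqAle gm // andbT; apply/negP => /eqP e.
      by apply: natt; exists s.
    have [u hu] : exists u : nat -> T, forall n, A (u n) /\ g (u n) < m + n.+1%:R^-1.
      have : forall n, exists s, A s /\ g s < m + n.+1%:R^-1.
        move=> n; have : m < m + n.+1%:R^-1 by rewrite ltrDl invr_gt0 ltr0Sn.
        move=> /(inf_lt _)[]; first by exists (g p0); exists p0.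
        by move=> _ [s As <-] h; exists s.
      by case/choice => u hu; exists u.
    pose su n := sval (u n).
    have key s n : A s -> g (u n) < g s -> Rle s (u n).
      move=> As hlt; have [//|h] := Atot _ _ As (hu n).1.
      move: h; rewrite /Rle => h; have := nn (sval s) (sval (u n)); lra.
    have dist n k : lam * `|su n - su k| < n.+1%:R^-1 + k.+1%:R^-1.
      have [An hn] := hu n; have [Ak hk] := hu k.
      have gn := gm _ An; have gk := gm _ Ak.
      have i1 : 0 < n.+1%:R^-1 :> R by rewrite invr_gt0 ltr0Sn.
      have i2 : 0 < k.+1%:R^-1 :> R by rewrite invr_gt0 ltr0Sn.
      move: i1 i2 hn hk; set a := n.+1%:R^-1; set b := k.+1%:R^-1 => i1 i2 hn hk.
      have [h|h] := Atot _ _ An Ak; move: h; rewrite /Rle /su => h.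
      + rewrite distrC; lra.
      + lra.
    have cvgu : cvg (su @ \oo).
      apply: cauchy_cvg; apply: cauchy_exP => e e0.
      have e1 : 0 < e * lam / 2 by rewrite divr_gt0 // mulr_gt0.
      have [N _ hN] := near_infty_natSinv_lt (PosNum e1).
      exists (su N); exists N => // n /= hn.
      rewrite -ball_normE /ball_ /=.
      have := dist N n.
      have : n.+1%:R^-1 <= N.+1%:R^-1 :> R.
        by rewrite lef_pV2 ?posrE ?ltr0Sn // ler_nat.
      have := hN N (leqnn N); rewrite /=.
      move: (N.+1%:R^-1) (n.+1%:R^-1) => a b hN' hle hd.
      have : lam * `|su N - su n| < e * lam by lra.
      by rewrite mulrC ltr_pM2r.
    pose t := lim (su @ \oo).
    have ut : su @ \oo --> t := cvgu.
    have bound s : A s -> (G t + (lam * `|t - sval s|)%:E <= (g s)%:E)%E.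
      move=> As.
      pose c := g s - lam * `|t - sval s|.
      suff : (G t <= c%:E)%E.
        move: (GB t); case: (G t) => // r _; rewrite -EFinD !lee_fin /c; lra.
      rewrite leNgt; apply/negP => hc.
      have [a [ca aG]] : exists a, c < a /\ (a%:E < G t)%E.
        move: hc; case: (G t) => [r| |] //.
        * rewrite lte_fin => cr; exists ((c + r) / 2); split.
          - lra.
          - rewrite lte_fin; lra.
        * by move=> _; exists (c + 1); split; [lra| exact: ltey].
      have [V Vt hV] := Glsc _ _ aG.
      have d0 : 0 < (a - c) / lam by rewrite divr_gt0 // subr_gt0.
      have gsm : 0 < g s - m by rewrite subr_gt0 mlt.
      have ev : \forall n \near \oo, [/\ V (su n), `|t - su n| < (a - c) / lam &
          n.+1%:R^-1 < g s - m].
        near=> n; split.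
        - near: n; exact: ut.
        - near: n; exact: cvgr_dist_lt.
        - near: n; exact: (near_infty_natSinv_lt (PosNum gsm)).
      have [n [Vn dn ln]] := filter_ex ev.
      have hk := key s n As.
      have : g (u n) < g s.
        have := (hu n).2; move: ln; move: (n.+1%:R^-1) => w; lra.
      move=> /hk; rewrite /Rle => hR.
      have := hV _ Vn; rewrite /su gE lte_fin => agn.
      have t1 := tri t (sval (u n)) (sval s).
      have : lam * `|t - sval (u n)| < a - c.
        by move: dn; rewrite ltr_pdivlMr // mulrC.
      rewrite /c in ca *; lra.
    have tin : inT t.
      have := bound _ Ap0; move: (GB t); case E: (G t) => [r| |] // _.
      rewrite -EFinD lee_fin => h.
      apply: (inTI _ _ E); have := inTE _ (svalP p0); rewrite -/(g p0).
      have := tri t (sval p0) x0; lra.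
    exists (exist _ t tin) => s As; rewrite /Rle /=.
    have := bound _ As; rewrite {1}(inT_fin _ tin) -EFinD lee_fin //.
exists (sval z); split.
  have := inTE _ (svalP z); rewrite -/(g z) gE -(fineK Gx0) lee_fin -/g0.
  by have := nn (sval z) x0; lra.
move=> x; rewrite leNgt; apply/negP => hx.
move: hx (GB x); rewrite gE; case E: (G x) => [r| |] //; rewrite -?EFinD lte_fin => hx _.
have xin : inT x.
  apply: (inTI _ _ E); have := inTE _ (svalP z); rewrite -/(g z).
  have := tri x (sval z) x0; lra.
pose xt : T := exist _ x xin.
have gxt : g xt = r by rewrite /g /= E.
have hR : Rle z xt.
  by rewrite /Rle gxt /=; lra.
have := zmax _ hR; rewrite /Rle gxt /= distrC => h.
have := nn x (sval z); lra.
Unshelve. all: by end_near.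
Qed.

End Ekeland.
Section Helpers.
Variables (R : realType) (X : completeNormedModType R).

Lemma convex_norm (s : R) (a b : X) : 0 < s < 1 ->
  `|s *: a + (1 - s) *: b| <= s * `|a| + (1 - s) * `|b|.
Proof.
move=> /andP[s0 s1]; apply: le_trans (ler_normD _ _) _.
by rewrite !normrZ (ger0_norm (ltW s0)) ger0_norm // subr_ge0 ltW.
Qed.

Definition kfun (mu K r : R) (x : X) : R := mu * `|x| + K * Num.max 0 (`|x| - r).

Lemma max0_ge0 (y : R) : 0 <= Num.max 0 y.
Proof. by rewrite le_max lexx. Qed.

Lemma max0_ge (y : R) : y <= Num.max 0 y.
Proof. by rewrite le_max lexx orbT. Qed.

Lemma kconv mu K r (s : R) (a b : X) : 0 <= mu -> 0 <= K -> 0 < s < 1 ->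
  kfun mu K r (s *: a + (1 - s) *: b) <= s * kfun mu K r a + (1 - s) * kfun mu K r b.
Proof.
move=> mu0 K0 s01; have /andP[s0 s1] := s01.
have h1 := convex_norm s a b s01.
have h2 : Num.max 0 (`|s *: a + (1 - s) *: b| - r) <=
    s * Num.max 0 (`|a| - r) + (1 - s) * Num.max 0 (`|b| - r).
  rewrite ge_max; apply/andP; split.
    by rewrite addr_ge0 // mulr_ge0 ?max0_ge0 // ?subr_ge0 ltW.
  have ha := max0_ge (`|a| - r); have hb := max0_ge (`|b| - r).
  have : s * (`|a| - r) <= s * Num.max 0 (`|a| - r) by rewrite ler_wpM2l // ltW.
  have : (1 - s) * (`|b| - r) <= (1 - s) * Num.max 0 (`|b| - r).
    by rewrite ler_wpM2l // subr_ge0 ltW.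
  move: h1; set na := `|a|; set nb := `|b|; set n := `|_ + _|.
  move: (Num.max 0 (na - r)) (Num.max 0 (nb - r)) => ma mb.
  move=> h1 hb' ha'.
  have e : s * (na - r) + (1 - s) * (nb - r) = s * na + (1 - s) * nb - r by ring.
  lra.
rewrite /kfun.
apply: le_trans (lerD (ler_wpM2l mu0 h1) (ler_wpM2l K0 h2)) _.
by rewrite le_eqVlt; apply/orP; left; apply/eqP; ring.
Qed.

Lemma kLip mu K r (p q : X) : 0 <= mu -> 0 <= K ->
  kfun mu K r p - kfun mu K r q <= (mu + K) * `|p - q|.
Proof.
move=> mu0 K0; rewrite /kfun.
have h1 : mu * (`|p| - `|q|) <= mu * `|p - q| by rewrite ler_wpM2l // lerB_dist.
have h2 : Num.max 0 (`|p| - r) - Num.max 0 (`|q| - r) <= `|p - q|.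
  have hq := max0_ge (`|q| - r); have hq0 := max0_ge0 (`|q| - r).
  have hd := lerB_dist p q; have hd0 := normr_ge0 (p - q).
  suff : Num.max 0 (`|p| - r) <= Num.max 0 (`|q| - r) + `|p - q| by lra.
  rewrite ge_max; apply/andP; split; lra.
have h2' := ler_wpM2l K0 h2.
move: h1 h2'; set d := `|p - q|.
move: (Num.max 0 (`|p| - r)) (Num.max 0 (`|q| - r)) => mp mq h1' h2''.
have e1 : mu * (`|p| - `|q|) = mu * `|p| - mu * `|q| by ring.
have e2 : K * (mp - mq) = K * mp - K * mq by ring.
have e3 : (mu + K) * d = mu * d + K * d by ring.
lra.
Qed.

Lemma k0 mu K r : 0 <= r -> kfun mu K r 0 = 0.
Proof.
by move=> r0; rewrite /kfun normr0 mulr0 add0r sub0r max_l ?mulr0 // oppr_le0.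
Qed.

Lemma kradial mu K r (z : X) : 0 <= r -> 0 <= K ->
  kfun mu K r 0 - kfun mu K r z <= - (mu * `|z|).
Proof.
move=> r0 K0; rewrite k0 // /kfun.
have := mulr_ge0 K0 (max0_ge0 (`|z| - r)).
move: (K * _) => w; lra.
Qed.

Lemma growth (f : X -> \bar R) x1 c1 :
  (forall x, f x != -oo%E) -> convex_fun f -> lower_semicontinuous f ->
  f x1 = c1%:E -> exists M, 0 < M /\ forall x, ((c1 - 1 - M * `|x - x1|)%:E <= f x)%E.
Proof.
move=> fnm fconv flsc fx1.
have : ((c1 - 1)%:E < f x1)%E by rewrite fx1 lte_fin; lra.
move=> /flsc [V /nbhs_ballP [d d0 dV] hV].
exists (2 / d); split; first by rewrite divr_gt0.
move=> x.
have Md0 : 0 <= 2 / d * `|x - x1| by rewrite mulr_ge0 // divr_ge0 // ltW.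
have [xd|xd] := ltP (`|x - x1|) d.
  apply: le_trans (ltW (hV x _)); first by rewrite lee_fin; lra.
  by apply: dV; rewrite -ball_normE /ball_ /= distrC.
set D := `|x - x1| in xd Md0 *.
have D0 : 0 < D by apply: lt_le_trans xd.
pose th := d / (2 * D).
have th0 : 0 < th by rewrite divr_gt0 // mulr_gt0.
have th1 : th < 1.
  rewrite /th ltr_pdivrMr ?mulr_gt0 // mul1r; lra.
have th01 : 0 < th < 1 by rewrite th0 th1.
have hy := fconv x x1 th th01.
have yin : V (th *: x + (1 - th) *: x1).
  apply: dV; rewrite -ball_normE /ball_ /=.
  have -> : x1 - (th *: x + (1 - th) *: x1) = th *: (x1 - x).
    by rewrite scalerBl scale1r scalerBr opprD opprB addrA addrC addrA addrNK addrC.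
  rewrite normrZ ger0_norm ?ltW // distrC -/D /th.
  have -> : d / (2 * D) * D = d / 2 by field; rewrite gt_eqF.
  by rewrite ltr_pdivrMr // ltr_pMr // ltr1n.
have hlt := hV _ yin.
move: (lt_le_trans hlt hy); rewrite fx1.
move: (fnm x); case: (f x) => [r| |] _ //; last by rewrite leey.
rewrite -!EFinM -EFinD lte_fin lee_fin => h.
have h2 : -1 < th * (r - c1) by lra.
have h3 : - th^-1 < r - c1.
  have i0 : 0 < th^-1 by rewrite invr_gt0.
  by have := h2; rewrite -(ltr_pM2l i0) mulrA mulVf ?gt_eqF // mul1r mulrN1.
have e : th^-1 = 2 / d * D by rewrite /th invfM invrK; field; rewrite !gt_eqF.
rewrite e in h3; lra.
Qed.

Lemma lsc_addk (f : X -> \bar R) (k : X -> R) (Lk : R) :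
  lower_semicontinuous f -> 0 <= Lk -> (forall p q, k p - k q <= Lk * `|p - q|) ->
  lower_semicontinuous (fun x => f x + (k x)%:E)%E.
Proof.
move=> flsc Lk0 kL x a h.
have [e [e0 hfe]] : exists e, 0 < e /\ ((a - k x + e)%:E < f x)%E.
  move: h; case: (f x) => [r| |] //.
  - rewrite -EFinD lte_fin => h; exists ((r + k x - a) / 2); split; first lra.
    rewrite lte_fin; lra.
  - by move=> _; exists 1; split; [exact: ltr01| exact: ltey].
have [V1 nV1 hV1] := flsc _ _ hfe.
have d0 : 0 < e / (Lk + 1) by rewrite divr_gt0 //; lra.
exists (V1 `&` ball x (e / (Lk + 1))); first by apply: filterI => //; exact: nbhsx_ballx.
move=> y [V1y By].
have := hV1 _ V1y.
have : k x - k y <= Lk * `|x - y| by exact: kL.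
move: By; rewrite -ball_normE /ball_ /= ltr_pdivlMr; last lra.
move=> hxy hk.
case: (f y) => [r| |] //=; last first.
  by move=> _; rewrite addye // ltey.
rewrite lte_fin => hr; rewrite -EFinD lte_fin.
have : Lk * `|x - y| <= `|x - y| * (Lk + 1) - `|x - y|.
  have : 0 <= `|x - y| by [].
  move: (`|x - y|) => w w0; rewrite le_eqVlt; apply/orP; left; apply/eqP; ring.
have := normr_ge0 (x - y); lra.
Qed.

End Helpers.
Arguments growth {R X}.
Arguments kLip {R X}.
Arguments kconv {R X}.
Arguments kradial {R X}.
Arguments k0 {R X}.
Arguments convex_norm {R X}.
Arguments kfun {R X}.
Theorem proposition1 (R : realType) (X : completeNormedModType R)
  (f : X -> \bar R) :
  proper_fun f -> convex_fun f -> lower_semicontinuous f ->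
  (forall (x : X) (p : X -> R), x \in dom_subdiff f -> subdiff f x p ->
     0 <= p x) ->
  subdiff f 0 (fun _ => 0).
Proof.
move=> [fnm [x' fx']] fconv flsc hyp.
have main : forall x1 c1, f x1 = c1%:E -> ~ (c1%:E < f (0%R : X))%E.
  move=> x1 c1 fx1 lt0.
  have [M [M0 hM]] := growth _ _ _ fnm fconv flsc fx1.
  have [mu [mu0 hmu]] : exists mu : R, 0 < mu /\ ((c1 + mu * `|x1|)%:E < f (0%R : X))%E.
    move: lt0; case E0: (f 0) => [c0| |] //.
    - rewrite lte_fin => c10.
      have n0 : 0 < `|x1| + 1 by rewrite ltr_wpDl.
      exists ((c0 - c1) / (2 * (`|x1| + 1))); split.
        by rewrite divr_gt0 ?subr_gt0 // mulr_gt0.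
      rewrite lte_fin.
      have e : (c0 - c1) / (2 * (`|x1| + 1)) * (`|x1| + 1) = (c0 - c1) / 2.
        by field; rewrite gt_eqF.
      have w0 : 0 < (c0 - c1) / (2 * (`|x1| + 1)) by rewrite divr_gt0 ?subr_gt0 // mulr_gt0.
      move: e w0; move: ((c0 - c1) / (2 * (`|x1| + 1))) => w e w0.
      lra.
    - by move=> _; exists 1; split; [exact: ltr01 | exact: ltey].
  pose r := `|x1|.
  have r0 : 0 <= r by exact: normr_ge0.
  pose lam := mu / 2.
  have lam0 : 0 < lam by rewrite divr_gt0.
  pose K := M.
  have K0 : 0 <= K by exact: ltW.
  pose k := @kfun R X mu K r.
  pose G x := (f x + (k x)%:E)%E.
  have Glsc : lower_semicontinuous G.
    apply: (@lsc_addk R X f k (mu + K)) => //.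
      by rewrite addr_ge0 // ltW.
    by move=> p q; apply: kLip => //; exact: ltW.
  have GB : forall x, ((c1 - 1 - 2 * M * r)%:E <= G x)%E.
    move=> x; rewrite /G; have := hM x; move: (fnm x); case: (f x) => [v| |] //= _.
      rewrite -EFinD !lee_fin => hv.
      have hk : M * `|x| - M * r <= k x.
        rewrite /k /kfun.
        have h1 : 0 <= mu * `|x| by rewrite mulr_ge0 // ltW.
        have h2 : K * (`|x| - r) <= K * Num.max 0 (`|x| - r).
          by rewrite ler_wpM2l // max0_ge.
        rewrite /K in h2 *; lra.
      have hd : M * `|x - x1| <= M * `|x| + M * r.
        by rewrite -mulrDr; apply: ler_wpM2l; [exact: ltW | exact: ler_normB].
      lra.
    by move=> _; rewrite addye // leey.
  have Gx1 : G x1 = (c1 + mu * r)%:E.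
    rewrite /G fx1 /k /kfun -/r subrr maxxx mulr0 addr0 //.
  have Gx1f : G x1 \is a fin_num by rewrite Gx1.
  have [z [Gz hz]] := @ekeland R X G lam (c1 - 1 - 2 * M * r) x1 lam0 Glsc GB Gx1f.
  move: Gz; rewrite Gx1 /G; move: (fnm z); case Ez: (f z) => [fz| |] //= _.
  rewrite -EFinD lee_fin => Gz.
  have k0' : k 0 = 0 by exact: (@k0 R X mu K r r0).
  have z0 : z != 0.
    apply/eqP => z0.
    have : fz + k 0 <= c1 + mu * r by rewrite -z0.
    rewrite k0' addr0 => h1.
    by move: hmu; rewrite -z0 Ez lte_fin -/r; lra.
  pose D := [set u | f (z + u) != +oo%E].
  pose phi u := fine (f (z + u)) - fz.
  pose rho w := k (z + w) - k z + lam * `|w|.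
  pose C := mu + K + lam.
  have finD u : D u -> f (z + u) = (fine (f (z + u)))%:E.
    by move=> Du; rewrite fineK // fin_numE Du fnm.
  have idz s u v : z + (s *: u + (1 - s) *: v) = s *: (z + u) + (1 - s) *: (z + v).
    rewrite !scalerDr addrACA -scalerDl.
    by rewrite (_ : s + (1 - s) = 1) ?scale1r // addrC subrK.
  have D0 : D 0 by rewrite /D /= addr0 Ez.
  have Dconv : forall (s : R) u v, 0 < s < 1 -> D u -> D v -> D (s *: u + (1 - s) *: v).
    move=> s u v s01 Du Dv; rewrite /D /= idz.
    have := fconv (z + u) (z + v) s s01; rewrite (finD _ Du) (finD _ Dv).
    rewrite -!EFinM -EFinD; case: (f _) => //.
  have phi0 : phi 0 = 0 by rewrite /phi addr0 Ez /= subrr.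
  have phiconv : forall (s : R) u v, 0 < s < 1 -> D u -> D v ->
      phi (s *: u + (1 - s) *: v) <= s * phi u + (1 - s) * phi v.
    move=> s u v s01 Du Dv; rewrite /phi.
    have Duv := Dconv s u v s01 Du Dv.
    have := fconv (z + u) (z + v) s s01; rewrite -idz (finD _ Du) (finD _ Dv) (finD _ Duv).
    rewrite -!EFinM -EFinD lee_fin.
    move: (fine (f (z + _))) (fine (f (z + u))) (fine (f (z + v))) => a b c h /=.
    lra.
  have rho0 : rho 0 = 0 by rewrite /rho addr0 subrr normr0 mulr0 addr0.
  have rhoconv : forall (s : R) u v, 0 < s < 1 ->
      rho (s *: u + (1 - s) *: v) <= s * rho u + (1 - s) * rho v.
    move=> s u v s01; rewrite /rho idz.
    have h1 := kconv mu K r s (z + u) (z + v) (ltW mu0) K0 s01; rewrite -/k in h1.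
    have h2 := ler_wpM2l (ltW lam0) (convex_norm s u v s01).
    move: h1 h2; move: (k _) (k (z + u)) (k (z + v)) => a b c h1 h2.
    lra.
  have rhoLip : forall a b, rho a - rho b <= C * `|a - b|.
    move=> a b; rewrite /rho.
    have h1 := kLip mu K r (z + a) (z + b) (ltW mu0) K0; rewrite -/k in h1.
    have e : z + a - (z + b) = a - b.
      by rewrite opprD addrACA addrN add0r.
    rewrite e in h1.
    have h2 := ler_wpM2l (ltW lam0) (lerB_dist a b).
    rewrite /C; lra.
  have phirho : forall u, D u -> - rho u <= phi u.
    move=> u Du; have := hz (z + u); rewrite /G Ez (finD _ Du).
    have e : z + u - z = u by rewrite addrAC addrN add0r.
    rewrite e -!EFinD lee_fin /rho /phi /=; lra.
  have [L [Llin [LD Lrho]]] := @sandwich R X D phi rho C D0 Dconv phi0 phiconv rho0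
    rhoconv rhoLip phirho.
  have L0 : L 0 = 0.
    have := Llin 1 0 0; rewrite scale1r addr0 mul1r; lra.
  have LN h : L (- h) = - L h.
    have := Llin (-1) h 0; rewrite scaleN1r addr0 L0 addr0; lra.
  have C0 : 0 < C by move: K0; rewrite /C; lra.
  have LB h : `|L h| <= C * `|h|.
    have hb v : L v <= C * `|v|.
      move: (Lrho v) (rhoLip (- v) 0); rewrite rho0 !subr0 normrN => h1 h2; lra.
    rewrite ler_norml; have := hb h; have := hb (- h); rewrite LN normrN; lra.
  have Lcont : continuous L.
    move=> x; apply/cvgrPdist_lt => e e0.
    have d0 : 0 < e / C by rewrite divr_gt0.
    near=> y.
    have hy : ball x (e / C) y by near: y; exact: near_ball.
    move: hy; rewrite -ball_normE /ball_ /= ltr_pdivlMr // => hy.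
    have -> : L x - L y = L (x - y).
      by have := Llin 1 x (- y); rewrite scale1r mul1r LN.
    apply: le_lt_trans (LB _) _; rewrite mulrC //.
  have sub : subdiff f z L.
    split; first by split.
    split; first by rewrite in_setE /edom /= Ez.
    move=> x; case Ex: (f x) => [v| |]; last by move: (fnm x); rewrite Ex.
    + have Dx : D (x - z) by rewrite /D /= subrKC Ex.
      have := LD _ Dx; rewrite /phi subrKC Ex /= => h.
      by rewrite Ez -EFinD lee_fin; lra.
    + exact: leey.
  have zdom : z \in dom_subdiff f by rewrite in_setE; exists L.
  have := hyp z L zdom sub.
  have := Lrho z; rewrite /rho subrr normrN.
  have := kradial mu K r z r0 K0; rewrite -/k.
  have := normr_gt0 z; rewrite z0 => nz.
  move=> h1 h2 h3; have p1 := mulr_gt0 mu0 nz.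
  have e : lam * `|z| = mu * `|z| / 2 by exact: mulrAC.
  have h4 := le_trans h2 (lerD h1 (lexx (lam * `|z|))).
  rewrite e in h4.
  move: h3 h4 p1; move: (L z) (mu * `|z|) => A B ha hb hc.
  clear -ha hb hc; lra.
split; first split.
- by move=> a x y; rewrite mulr0 addr0.
- exact: cst_continuous.
split.
- rewrite in_setE /edom /=; apply/negP => /eqP f0.
  move: fx' (fnm x'); case Ex: (f x') => [c| |] // _ _.
  by apply: (main x' c Ex); rewrite f0 ltey.
- move=> x; rewrite /= adde0 leNgt; apply/negP => hx.
  move: (fnm x) hx; case Ex: (f x) => [c| |] // _ hx.
    exact: (main x c Ex).
  by move: hx; rewrite ltNge leey.
Unshelve. all: by end_near.
Qed.
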